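(* Let $M$ be a Puiseux monoid, $R$ a GCD-domain, and $F$ the field of fractions of $R$. Then an element $f \in R[M]\setminus R$ is irreducible in $R[M]$ if and only if $f$ is primitive in $R[M]$ and $f$ is irreducible in $F[M]$.
   Context: A Puiseux monoid is an additive submonoid of $(\mathbb{Q}_{\ge 0},+)$. For a commutative ring $R$ and a Puiseux monoid $M$, $R[M]$ denotes the semigroup ring of $M$ over $R$ (finite formal sums $\sum_{s\in M} f(s)X^s$ with $X^sX^t=X^{s+t}$). Every nonzero $f\in R[M]$ has a unique canonical form $f=\alpha_1X^{q_1}+\dots+\alpha_kX^{q_k}$ with all $\alpha_i\neq 0$ and $q_1>\dots>q_k$. For $R$ a GCD-domain, the content $\mathsf{c}(f)$ is the set of greatest common divisors of $\alpha_1,\dots,\alpha_k$ in $R$, and $f$ is called primitive if $\mathsf{c}(f)\subseteq R^\times$ (the units of $R$). $R[M]$ is an integral domain whose units are exactly $R^\times$ when $R$ is an integral domain. *)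

(* Defs.v *)
From HB Require Import structures.
From mathcomp Require Import all_boot all_order all_algebra.
Set Implicit Arguments. Unset Strict Implicit. Unset Printing Implicit Defensive.
Import Order.TTheory GRing.Theory Num.Theory.
Local Open Scope ring_scope.

Definition puiseux_monoid (M : pred rat) : Prop :=
  [/\ (0 : rat) \in M,
      (forall p q : rat, p \in M -> q \in M -> p + q \in M) &
      (forall q : rat, q \in M -> 0 <= q)].

(* Elements of the semigroup ring R[M] are represented by finite formal sums
   sum_i r_i X^{q_i}, given as a list of pairs (q_i, r_i).  Two formal sums
   denote the same element iff they have the same coefficient function. *)
Definition fcoef (R : comNzRingType) (f : seq (rat * R)) (q : rat) : R :=
  \sum_(x <- f | x.1 == q) x.2.

Definition in_sring (R : comNzRingType) (M : pred rat) (f : seq (rat * R)) : bool :=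
  all (fun x => x.1 \in M) f.

Definition feq (R : comNzRingType) (f g : seq (rat * R)) : Prop :=
  forall q, fcoef f q = fcoef g q.

Definition fmul (R : comNzRingType) (f g : seq (rat * R)) : seq (rat * R) :=
  [seq (x.1 + y.1, x.2 * y.2) | x <- f, y <- g].

Definition fone (R : comNzRingType) : seq (rat * R) := [:: (0, 1)].

Definition sr_unit (R : comNzRingType) (M : pred rat) (f : seq (rat * R)) : Prop :=
  exists2 g, in_sring M g & feq (fmul f g) (fone R).

Definition sr_irreducible (R : comNzRingType) (M : pred rat) (f : seq (rat * R)) : Prop :=
  [/\ ~ feq f [::], ~ sr_unit M f &
      forall g h, in_sring M g -> in_sring M h -> feq f (fmul g h) ->
        sr_unit M g \/ sr_unit M h].

Definition sr_const (R : comNzRingType) (f : seq (rat * R)) : Prop :=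
  forall q : rat, q != 0 -> fcoef f q = 0.

Definition rdvd (R : comNzRingType) (d a : R) : Prop := exists c, a = c * d.

Definition is_gcd (R : comNzRingType) (S : R -> Prop) (d : R) : Prop :=
  (forall a, S a -> rdvd d a) /\
  (forall e, (forall a, S a -> rdvd e a) -> rdvd e d).

Definition gcd_domain (R : idomainType) : Prop :=
  forall a b : R, exists d, is_gcd (fun x => x = a \/ x = b) d.

Definition content (R : comNzRingType) (f : seq (rat * R)) (d : R) : Prop :=
  is_gcd (fun a => exists q, fcoef f q != 0 /\ a = fcoef f q) d.

Definition primitive (R : idomainType) (f : seq (rat * R)) : Prop :=
  forall d, content f d -> d \is a GRing.unit.

Definition to_frac_sring (R : idomainType) (f : seq (rat * R))
  : seq (rat * {fraction R}) :=
  [seq (x.1, @FracField.tofrac R x.2) | x <- f].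

(* Main.v *)
Require Import Defs.
From HB Require Import structures.
From mathcomp Require Import all_boot all_order all_algebra.
From Stdlib Require Import Classical ClassicalEpsilon.
From mathcomp Require Import zify ring.
Set Implicit Arguments. Unset Strict Implicit. Unset Printing Implicit Defensive.
Import Order.TTheory GRing.Theory Num.Theory.
Local Open Scope ring_scope.
Notation "x %:F" := (@FracField.tofrac _ x).

Section Gcd.
Variable R : idomainType.
Hypothesis hR : gcd_domain R.
Implicit Types a b c d e x y : R.

Lemma rdvd_refl a : rdvd a a. Proof. by exists 1; rewrite mul1r. Qed.
Lemma rdvd0 a : rdvd a 0. Proof. by exists 0; rewrite mul0r. Qed.
Lemma rdvd1 a : rdvd 1 a. Proof. by exists a; rewrite mulr1. Qed.
Lemma rdvd_trans a b c : rdvd a b -> rdvd b c -> rdvd a c.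
Proof. by move=> [k ->] [l ->]; exists (l * k); rewrite mulrA. Qed.
Lemma rdvdD a b c : rdvd a b -> rdvd a c -> rdvd a (b + c).
Proof. by move=> [k ->] [l ->]; exists (k + l); rewrite mulrDl. Qed.
Lemma rdvdN a b : rdvd a b -> rdvd a (- b).
Proof. by move=> [k ->]; exists (- k); rewrite mulNr. Qed.
Lemma rdvdB a b c : rdvd a b -> rdvd a c -> rdvd a (b - c).
Proof. by move=> h1 h2; apply: rdvdD => //; apply: rdvdN. Qed.
Lemma rdvdMl a b c : rdvd a b -> rdvd a (c * b).
Proof. by move=> [k ->]; exists (c * k); rewrite mulrA. Qed.
Lemma rdvdMr a b c : rdvd a b -> rdvd a (b * c).
Proof. by move=> h; rewrite mulrC; apply: rdvdMl. Qed.
Lemma rdvd_mul2l y a b : y != 0 -> rdvd (y * a) (y * b) -> rdvd a b.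
Proof.
move=> y0 [k]; rewrite mulrCA => /(mulfI y0) ->; exact: rdvdMl (rdvd_refl _).
Qed.
Lemma rdvd_mul a b c d : rdvd a b -> rdvd c d -> rdvd (a * c) (b * d).
Proof. by move=> [k ->] [l ->]; exists (k * l); rewrite mulrACA. Qed.
Lemma rdvd_unit a b : rdvd a b -> b \is a GRing.unit -> a \is a GRing.unit.
Proof. by move=> [k ->] /unitrP [z [h1 h2]]; apply/unitrP; exists (z * k); split;
  [rewrite -mulrA mulrC | rewrite mulrA mulrC mulrA]. Qed.
Lemma rdvd0_eq a : rdvd 0 a -> a = 0.
Proof. by move=> [k ->]; rewrite mulr0. Qed.

Definition bgcd a b d := [/\ rdvd d a, rdvd d b &
  forall e, rdvd e a -> rdvd e b -> rdvd e d].

Lemma bgcd_ex a b : exists d, bgcd a b d.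
Proof.
have [d [h1 h2]] := hR a b; exists d; split.
- by apply: h1; left.
- by apply: h1; right.
- by move=> e ea eb; apply: h2 => z [->|->].
Qed.

Lemma bgcd_scale y a b d : bgcd a b d -> bgcd (y * a) (y * b) (y * d).
Proof.
move=> [da db dm].
have [g [ga gb gm]] := bgcd_ex (y * a) (y * b).
have ydg : rdvd (y * d) g by apply: gm; apply: rdvd_mul => //; exact: rdvd_refl.
have [->|y0] := eqVneq y 0.
  by rewrite !mul0r; split; try exact: rdvd_refl; move=> *; exact: rdvd0.
have [g' eg] : rdvd y g by apply: (gm y); apply: rdvdMr; exact: rdvd_refl.
have g'd : rdvd g' d.
  apply: dm.
    by apply: (@rdvd_mul2l y) => //; rewrite [y * g']mulrC -eg.
  by apply: (@rdvd_mul2l y) => //; rewrite [y * g']mulrC -eg.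
split.
- exact: rdvd_mul (rdvd_refl _) da.
- exact: rdvd_mul (rdvd_refl _) db.
- move=> e ea eb; apply: rdvd_trans (gm e ea eb) _.
  by rewrite eg mulrC; apply: rdvd_mul (rdvd_refl _) g'd.
Qed.

Lemma coprime_dvd x y b d : bgcd x y d -> d \is a GRing.unit ->
  rdvd x (y * b) -> rdvd x b.
Proof.
move=> g du xyb.
have [h1 h2 h3] := bgcd_scale b g.
have := h3 x; rewrite (mulrC b x) (mulrC b y) => /(_ (rdvdMr _ (rdvd_refl x)) xyb).
move=> [k] e.
by exists (k * d^-1); rewrite mulrAC -e mulrK.
Qed.
End Gcd.

Section Poly.
Variable R : idomainType.
Hypothesis hR : gcd_domain R.
Implicit Types a b c d e x y : R.
Implicit Types p q : {poly R}.

Definition prim p := forall d, (forall i, rdvd d p`_i) -> d \is a GRing.unit.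

Lemma lgcd_ex (s : seq R) : exists d, (forall a, a \in s -> rdvd d a) /\
  (forall e, (forall a, a \in s -> rdvd e a) -> rdvd e d).
Proof.
elim: s => [|a s [d [h1 h2]]]; first by exists 0; split => [a|e _]; [rewrite in_nil | exact: rdvd0].
have [g [ga gd gm]] := bgcd_ex hR a d.
exists g; split.
  by move=> z; rewrite inE => /orP [/eqP ->|/h1]; [|apply: rdvd_trans].
move=> e he; apply: gm; first by apply: he; rewrite inE eqxx.
by apply: h2 => z zs; apply: he; rewrite inE zs orbT.
Qed.

Lemma prim_neq0 p : prim p -> p != 0.
Proof.
move=> pp; apply/negP => /eqP p0.
suff: (0:R) \is a GRing.unit by rewrite unitr0.
by apply: pp => i; rewrite p0 coef0; exact: rdvd0.
Qed.

Lemma prim_scale q x y : prim q -> (forall i, rdvd x (y * q`_i)) -> rdvd x y.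
Proof.
move=> pq h.
have [z [zx zy zm]] := bgcd_ex hR x y.
have [z0|z0] := eqVneq z 0.
  by move: zy; rewrite z0 => /rdvd0_eq ->; exact: rdvd0.
move: (zx) (zy) => [x' ex] [y' ey].
have [w gw] := bgcd_ex hR x' y'.
have [sw1 sw2 sw3] := bgcd_scale hR z gw.
have wu : w \is a GRing.unit.
  have : rdvd (z * w) z.
    apply: zm; [rewrite ex (mulrC x'); exact: sw1 | rewrite ey (mulrC y'); exact: sw2].
  move=> [k]; rewrite mulrCA -{1}(mulr1 z) => /(mulfI z0) e.
  by apply/unitrP; exists k; split; [rewrite e | rewrite mulrC e].
have x'q : forall i, rdvd x' q`_i.
  move=> i; apply: (coprime_dvd hR gw wu).
  apply: (@rdvd_mul2l _ z) => //; rewrite mulrA -[z * x']mulrC -ex -[z*y']mulrC -ey.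
  exact: h.
have x'u := pq _ x'q.
apply: rdvd_trans zy; rewrite ex; exists x'^-1; by rewrite mulrA mulVr ?mul1r.
Qed.

Lemma rdvd_choice (d : R) (s : nat -> R) : (forall i, rdvd d (s i)) ->
  exists k : nat -> R, forall i, s i = k i * d.
Proof.
move=> h.
exists (fun i => proj1_sig (constructive_indefinite_description _ (h i))).
move=> i; exact: (proj2_sig (constructive_indefinite_description _ (h i))).
Qed.

Lemma divide_out d p : (forall i, rdvd d p`_i) -> exists q, p = d *: q.
Proof.
move=> /rdvd_choice [k hk]; exists (\poly_(i < size p) k i).
apply/polyP => i; rewrite coefZ coef_poly; case: ltnP => hi.
  by rewrite hk mulrC.
by rewrite mulr0 nth_default.
Qed.

Lemma prim1 : prim 1.
Proof. by move=> d /(_ 0%N); rewrite coef1 eqxx => /rdvd_unit; apply; exact: unitr1. Qed.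

Lemma decomp p : exists c q, p = c *: q /\ prim q.
Proof.
have [->|p0] := eqVneq p 0; first by exists 0, 1; rewrite scale0r; split => //; exact: prim1.
have [c [h1 h2]] := lgcd_ex p.
have cp : forall i, rdvd c p`_i.
  move=> i; case: (ltnP i (size p)) => hi; first by apply: h1; exact: mem_nth.
  by rewrite nth_default //; exact: rdvd0.
have c0 : c != 0.
  apply/eqP => c0; move/eqP: p0; apply; apply/polyP => i; rewrite coef0.
  move: (cp i); rewrite c0; exact: rdvd0_eq.
have [q pq] := divide_out cp.
exists c, q; split => // d dq.
have : rdvd (c * d) c.
  apply: h2 => a ap; rewrite -(nth_index 0 ap) pq coefZ.
  by apply: rdvd_mul; [exact: rdvd_refl | exact: dq].
move=> [k]; rewrite mulrCA -{1}(mulr1 c) => /(mulfI c0) e.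
by apply/unitrP; exists k; split; [rewrite e | rewrite mulrC e].
Qed.

Lemma split_lead p : p != 0 -> exists p1, p = p1 + lead_coef p *: 'X^((size p).-1) /\ (size p1 < size p)%N.
Proof.
move=> p0; exists (\poly_(i < (size p).-1) p`_i); split.
  apply/polyP => i; rewrite coefD coefZ coefXn coef_poly /lead_coef.
  have sp : (0 < size p)%N by rewrite size_poly_gt0.
  case: (ltngtP i (size p).-1) => hi.
  - by rewrite mulr0 addr0.
  - rewrite mulr0 addr0 nth_default //; by rewrite -(prednK sp).
  - by rewrite hi mulr1 add0r.
apply: leq_ltn_trans (size_poly _ _) _.
by rewrite prednK // size_poly_gt0.
Qed.

Lemma rdvd_coefXnM e a k q i : rdvd e a -> rdvd e ((a *: 'X^k * q)`_i).
Proof. by move=> h; rewrite -scalerAl coefZ; apply: rdvdMr. Qed.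

Lemma half p q e : prim p ->
  (forall p', (size p' < size p)%N -> prim p' -> prim (p' * q)) ->
  (forall i, rdvd e (p * q)`_i) -> rdvd e (lead_coef p) -> e \is a GRing.unit.
Proof.
move=> pp IH he ea.
have [p1 [ep sp1]] := split_lead (prim_neq0 pp).
have [c1 [q1 [ep1 pq1]]] := decomp p1.
have ec1 : rdvd e c1.
  have [->|c10] := eqVneq c1 0; first exact: rdvd0.
  apply: (@prim_scale (q1 * q)).
    apply: IH => //; move: sp1; by rewrite ep1 size_scale.
  move=> i; rewrite -coefZ scalerAl -ep1.
  have -> : p1 * q = p * q - lead_coef p *: 'X^((size p).-1) * q.
    by rewrite {1}ep mulrDl addrK.
  by rewrite coefB; apply: rdvdB => //; exact: rdvd_coefXnM.
apply: pp => i; rewrite ep coefD ep1 coefZ coefZ.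
by apply: rdvdD; apply: rdvdMr.
Qed.

Lemma gauss p q : prim p -> prim q -> prim (p * q).
Proof.
suff: forall n p q, (size p + size q < n)%N -> prim p -> prim q -> prim (p * q).
  by move=> h; apply: h (ltnSn _).
elim=> // n IH {}p {}q hs pp pq d hd.
have [e [ed ea em]] := bgcd_ex hR d (lead_coef p).
have eu : e \is a GRing.unit.
  apply: (@half p q e pp) => //.
    move=> p' sp' pp'; apply: IH => //.
    lia.
  by move=> i; apply: rdvd_trans (hd i).
have db : rdvd d (lead_coef q).
  apply: (coprime_dvd hR (And3 ed ea em) eu).
  by rewrite -lead_coefM /lead_coef; apply: hd.
apply: (@half q p d pq) => //.
  move=> q' sq' pq'; rewrite mulrC; apply: IH => //.
  lia.
by rewrite mulrC.
Qed.
End Poly.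

Definition okq (N : nat) (q : rat) := exists n : nat, q = n%:R / N%:R.

Lemma okq_den (N : nat) (q : rat) : (0 < N)%N -> 0 <= q -> (`|denq q| %| N)%N -> okq N q.
Proof.
move=> N0 q0 /dvdnP [K eN].
exists (`|numq q| * K)%N.
have D0 : (0 < `|denq q|)%N by rewrite absz_gt0 denq_neq0.
have K0 : (0 < K)%N by move: N0; rewrite eN muln_gt0 => /andP [].
rewrite eN !natrM -[in LHS](divq_num_den q).
have -> : (numq q)%:Q = (`|numq q|%N)%:R.
  have nq0 : 0 <= numq q by rewrite numq_ge0.
  by rewrite -[in LHS](gez0_abs nq0) pmulrn.
have -> : (denq q)%:Q = (`|denq q|%N)%:R.
  by rewrite -[in LHS](gez0_abs (ltW (denq_gt0 q))) pmulrn.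
rewrite [_ * K%:R]mulrC -mulf_div divff ?mulr1 //.
  by rewrite mul1r.
by rewrite pnatr_eq0 -lt0n.
Qed.

Definition idx (N : nat) (q : rat) : nat := `|numq (q * N%:R)|%N.

Lemma idxE (N n : nat) : (0 < N)%N -> idx N (n%:R / N%:R) = n.
Proof.
move=> N0; rewrite /idx mulfVK ?pnatr_eq0 -?lt0n //.
by rewrite pmulrn numq_int.
Qed.

Lemma okq_eq (N : nat) (q : rat) (k : nat) : (0 < N)%N -> okq N q ->
  (idx N q == k) = (q == k%:R / N%:R).
Proof.
move=> N0 [n ->]; rewrite idxE //.
apply/eqP/eqP => [->//|].
move/(congr1 (idx N)); rewrite !idxE //.
Qed.

Lemma okq_add N q1 q2 : (0 < N)%N -> okq N q1 -> okq N q2 -> okq N (q1 + q2) /\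
  idx N (q1 + q2) = (idx N q1 + idx N q2)%N.
Proof.
move=> N0 [n1 ->] [n2 ->]; rewrite -mulrDl -natrD; split; first by exists (n1 + n2)%N.
by rewrite !idxE.
Qed.

Lemma okq0 N : okq N 0. Proof. by exists 0%N; rewrite mul0r. Qed.
Lemma idx0 N : idx N 0 = 0%N. Proof. by rewrite /idx mul0r. Qed.

Section Trans.
Variable K : idomainType.
Variable N : nat.
Hypothesis N0 : (0 < N)%N.
Implicit Types f g h : seq (rat * K).

Definition okl f := forall x, x \in f -> okq N x.1.
Definition Pp f : {poly K} := \sum_(x <- f) x.2 *: 'X^(idx N x.1).

Lemma coef_Pp f k : okl f -> (Pp f)`_k = fcoef f (k%:R / N%:R).
Proof.
move=> ok; rewrite /Pp coef_sum /fcoef [RHS]big_mkcond /=.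
apply: eq_big_seq => x xf; rewrite coefZ coefXn eq_sym okq_eq //; last exact: ok.
by case: ifP; rewrite ?mulr1 ?mulr0.
Qed.

Lemma fcoef_nok f q : okl f -> ~ okq N q -> fcoef f q = 0.
Proof.
move=> ok nq; rewrite /fcoef big_seq_cond big1 // => x /andP [xf /eqP e].
by case: nq; rewrite -e; apply: ok.
Qed.

Lemma Pp_feq f g : okl f -> okl g -> (feq f g <-> Pp f = Pp g).
Proof.
move=> okf okg; split => [e|e q].
  by apply/polyP => k; rewrite !coef_Pp.
have [[n ->]|nq] := classic (okq N q).
  by rewrite -!coef_Pp // e.
by rewrite !fcoef_nok.
Qed.

Lemma okl_fmul f g : okl f -> okl g -> okl (fmul f g).
Proof.
move=> okf okg x /allpairsP [[a b] [af bg ->]] /=.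
by case: (okq_add N0 (okf a af) (okg b bg)).
Qed.

Lemma Pp_mul f g : okl f -> okl g -> Pp (fmul f g) = Pp f * Pp g.
Proof.
move=> okf okg; rewrite /Pp /fmul big_allpairs_dep /= mulr_suml.
apply: eq_big_seq => a af; rewrite mulr_sumr; apply: eq_big_seq => b bg /=.
have [_ ->] := okq_add N0 (okf a af) (okg b bg).
by rewrite -scalerAl -scalerAr scalerA exprD.
Qed.

Lemma okl_fone : okl (fone K).
Proof. by move=> x; rewrite inE => /eqP -> /=; exact: okq0. Qed.

Lemma Pp_fone : Pp (fone K) = 1.
Proof. by rewrite /Pp big_seq1 /= idx0 expr0 scale1r. Qed.

Lemma Pp_const f : okl f -> (sr_const f <-> (size (Pp f) <= 1)%N).
Proof.
move=> ok; split => [c|s q q0].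
  apply/leq_sizeP => j j1; rewrite coef_Pp // c //.
  by rewrite mulf_eq0 invr_eq0 !pnatr_eq0 negb_or; apply/andP; split; lia.
have [[n en]|nq] := classic (okq N q); last by rewrite fcoef_nok.
rewrite en -coef_Pp //; move/leq_sizeP: s; apply.
by case: n en => // en; move: q0; rewrite en mul0r eqxx.
Qed.

Definition Qp (p : {poly K}) : seq (rat * K) :=
  [seq (i%:R / N%:R, p`_i) | i <- [seq i <- iota 0 (size p) | p`_i != 0]].

Lemma okl_Q p : okl (Qp p).
Proof. by move=> x /mapP [i _ ->]; exists i. Qed.

Lemma natdiv_eq (i k : nat) : (i%:R / N%:R == k%:R / N%:R :> rat) = (i == k).
Proof.
have := okq_eq k N0 (ex_intro _ i erefl : okq N (i%:R / N%:R)).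
by rewrite idxE.
Qed.

Lemma Pp_Q p : Pp (Qp p) = p.
Proof.
apply/polyP => k; rewrite coef_Pp; last exact: okl_Q.
rewrite /fcoef /Qp big_map big_filter_cond /=.
under eq_bigl => i do rewrite natdiv_eq.
rewrite big_mkcond /=.
rewrite (eq_bigr (fun i => if i == k then p`_i else 0)); last first.
  by move=> i _; case: (eqVneq p`_i 0) => [->|] /=; case: (i == k).
rewrite -big_mkcond.
have -> : iota 0 (size p) = index_iota 0 (size p) by rewrite /index_iota subn0.
rewrite big_mkord big_ord1_eq; case: ltnP => // h.
by rewrite nth_default.
Qed.

Lemma in_sring_Q (M : pred rat) (p : {poly K}) : (forall i, p`_i != 0 -> i%:R / N%:R \in M) ->
  in_sring M (Qp p).
Proof.
move=> h; apply/allP => x /mapP [i]; rewrite mem_filter => /andP [pi _] -> /=.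
exact: h.
Qed.

Lemma supp_Pp (M : pred rat) f : okl f -> in_sring M f ->
  forall i, (Pp f)`_i != 0 -> i%:R / N%:R \in M.
Proof.
move=> ok /allP hf i; rewrite coef_Pp // /fcoef; apply: contraNT => nM.
rewrite big_seq_cond big1 // => x /andP [xf /eqP e].
by move: (hf x xf); rewrite e (negbTE nM).
Qed.

Lemma unit_const f g : okl f -> okl g -> feq (fmul f g) (fone K) -> sr_const f.
Proof.
move=> okf okg /(Pp_feq (okl_fmul okf okg) okl_fone).
rewrite Pp_mul // Pp_fone => e.
apply/(Pp_const okf).
have : Pp f \is a GRing.unit by apply/unitrPr; exists (Pp g).
by rewrite poly_unitE => /andP [/eqP -> _].
Qed.

End Trans.

Section FracEx.
Local Open Scope quotient_scope.
Import FracField.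

Lemma frac_ex (R : idomainType) (x : {fraction R}) :
  exists a b : R, b != 0 /\ x * b%:F = a%:F.
Proof.
elim/quotW: x => r.
exists (frac r).1, (frac r).2; split; first exact: denom_ratioP.
unlock FracField.tofrac.
rewrite /GRing.mul /= -pi_mul; apply/eqmodP.
rewrite /= equivfE /mulf /= !numden_Ratio ?oner_neq0 ?mulr1 //.
  by rewrite mulrC.
  exact: denom_ratioP.
exact: denom_ratioP.
Qed.

Lemma clear_den (R : idomainType) (G : {poly {fraction R}}) :
  exists a : R, a != 0 /\ exists G' : {poly R}, map_poly (@FracField.tofrac R) G' = a%:F *: G.
Proof.
elim/poly_ind: G => [|G1 c [a1 [a10 [G1' e1]]]].
  by exists 1; split; [exact: oner_neq0 | exists 0; rewrite map_poly0 scaler0].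
have [x [b [b0 hx]]] := frac_ex c.
exists (a1 * b); split; first by rewrite mulf_neq0.
exists (b *: G1' * 'X + (a1 * x)%:P).
rewrite rmorphD rmorphM /= map_polyZ map_polyX map_polyC /= e1 rmorphM /= -hx rmorphM /=.
rewrite -!mul_polyC !polyCM; ring.
Qed.

End FracEx.

Lemma exN (s : seq rat) : (forall q, q \in s -> 0 <= q) ->
  exists N, (0 < N)%N /\ forall q, q \in s -> okq N q.
Proof.
move=> hs.
suff [N [N0 hN]] : exists N, (0 < N)%N /\ forall q, q \in s -> (`|denq q| %| N)%N.
  by exists N; split => // q qs; apply: okq_den => //; [exact: hs | exact: hN].
elim: s hs => [|a s IH] hs; first by exists 1%N.
have [|N [N0 hN]] := IH; first by move=> q qs; apply: hs; rewrite inE qs orbT.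
exists (`|denq a| * N)%N; split.
  by rewrite muln_gt0 N0 absz_gt0 denq_neq0.
move=> q; rewrite inE => /orP [/eqP ->|qs]; first exact: dvdn_mulr.
by apply: dvdn_mull; exact: hN.
Qed.

Section Lists.
Variable K : idomainType.
Variable M : pred rat.
Hypothesis hM : puiseux_monoid M.
Implicit Types f g h : seq (rat * K).

Lemma in_sring_pos f q : in_sring M f -> q \in map fst f -> 0 <= q.
Proof.
case: hM => _ _ hp /allP hf /mapP [x xf ->]; apply: hp; exact: hf.
Qed.

Lemma okl_of N f (s : seq rat) : (forall q, q \in s -> okq N q) ->
  {subset map fst f <= s} -> okl N f.
Proof. by move=> hs sub x xf; apply: hs; apply: sub; apply: map_f. Qed.

Lemma fcoef_nil q : fcoef ([::] : seq (rat * K)) q = 0.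
Proof. by rewrite /fcoef big_nil. Qed.

Lemma nonconst_nz f : ~ sr_const f -> ~ feq f [::].
Proof. by move=> nc e; apply: nc => q _; rewrite e fcoef_nil. Qed.

Lemma unit_const' g : in_sring M g -> sr_unit M g -> sr_const g.
Proof.
move=> hg [h hh e].
have [|N [N0 hN]] := exN (s := map fst g ++ map fst h).
  move=> q; rewrite mem_cat => /orP [] qs; [exact: in_sring_pos hg qs | exact: in_sring_pos hh qs].
apply: (unit_const N0 (g := h)) e.
  by apply: okl_of hN _ => q qs; rewrite mem_cat qs.
by apply: okl_of hN _ => q qs; rewrite mem_cat qs orbT.
Qed.

Lemma nonconst_nonunit f : in_sring M f -> ~ sr_const f -> ~ sr_unit M f.
Proof. by move=> hf nc u; apply: nc; apply: unit_const'. Qed.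

Lemma Pp_C N (u : K) : Pp N [:: (0, u)] = u%:P.
Proof. by rewrite /Pp big_seq1 /= idx0 expr0 alg_polyC. Qed.

Lemma okl_C N (u : K) : okl N [:: (0, u)].
Proof. by move=> x; rewrite inE => /eqP -> /=; exact: okq0. Qed.

Lemma in_sring_C (u : K) : in_sring M [:: (0, u)].
Proof. by case: hM => h0 _ _; rewrite /in_sring /= h0. Qed.

Lemma const_unit N g c : (0 < N)%N -> okl N g -> Pp N g = c%:P -> c \is a GRing.unit ->
  sr_unit M g.
Proof.
move=> N0 ok e cu; exists [:: (0, c^-1)]; first exact: in_sring_C.
have h1 := okl_fmul N0 ok (okl_C N (u:=c^-1)).
have h2 := (Pp_feq N0 h1 (okl_fone (K:=K) N)).
apply/h2.
by rewrite Pp_mul ?Pp_C ?e ?Pp_fone -?polyCM ?mulrV //; exact: okl_C.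
Qed.

Lemma C_unit (c : K) : sr_unit M [:: (0, c)] -> c \is a GRing.unit.
Proof.
move=> [k hk e].
have [|N [N0 hN]] := exN (s := map fst k).
  by move=> q qs; exact: in_sring_pos hk qs.
have okk : okl N k by apply: okl_of hN _.
move/(Pp_feq N0 (okl_fmul N0 (okl_C N (u:=c)) okk) (okl_fone (K:=K) N)): e.
rewrite Pp_mul //; last exact: okl_C.
rewrite Pp_C Pp_fone => e0; have := congr1 (fun p : {poly K} => p`_0) e0.
rewrite /= coefCM coef1 /= => e.
by apply/unitrPr; exists (Pp N k)`_0.
Qed.
End Lists.

Section Frac.
Variable R : idomainType.
Implicit Types f g h : seq (rat * R).
Local Notation tf := (@to_frac_sring R).

Lemma fcoef_frac f q : fcoef (tf f) q = (fcoef f q)%:F.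
Proof. by rewrite /fcoef /to_frac_sring big_map rmorph_sum. Qed.

Lemma fst_frac f : map fst (tf f) = map fst f.
Proof. by rewrite /to_frac_sring -map_comp. Qed.

Lemma okl_frac N f : okl N f -> okl N (tf f).
Proof. by move=> ok x /mapP [y yf ->] /=; exact: ok. Qed.

Lemma Pp_frac N f : (0 < N)%N -> okl N f -> Pp N (tf f) = map_poly (@FracField.tofrac R) (Pp N f).
Proof.
move=> N0 ok; apply/polyP => k; rewrite coef_map /= !coef_Pp //; last exact: okl_frac.
exact: fcoef_frac.
Qed.

Lemma to_frac_fmul f g : tf (fmul f g) = fmul (tf f) (tf g).
Proof.
elim: f => [|a f IH] //=; rewrite /fmul /=.
rewrite {1}/to_frac_sring map_cat -/(fmul f g) -/(tf (fmul f g)) IH; congr (_ ++ _).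
by rewrite /to_frac_sring -!map_comp; apply: eq_map => y /=; rewrite rmorphM.
Qed.

Lemma in_sring_frac M f : in_sring M f -> in_sring M (tf f).
Proof. by rewrite /in_sring all_map. Qed.

Lemma feq_frac f g : feq f g -> feq (tf f) (tf g).
Proof. by move=> e q; rewrite !fcoef_frac e. Qed.

Lemma const_frac f : sr_const (tf f) <-> sr_const f.
Proof.
split => h q q0; move: (h q q0); rewrite ?fcoef_frac.
  by move/eqP; rewrite tofrac_eq0 => /eqP.
by move=> ->; rewrite rmorph0.
Qed.
End Frac.

Section Content.
Variable R : idomainType.
Hypothesis hR : gcd_domain R.
Implicit Types f g h : seq (rat * R).

Lemma assoc x y (p q : {poly R}) : x != 0 -> x *: p = y *: q -> prim p -> prim q ->
  exists2 u, u \is a GRing.unit & p = u *: q.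
Proof.
move=> x0 e pp pq.
have ci i : x * p`_i = y * q`_i by rewrite -!coefZ e.
have [k ek] : rdvd y x.
  apply: (prim_scale hR pp) => i; rewrite ci; apply: rdvdMr; exact: rdvd_refl.
have [l el] : rdvd x y.
  apply: (prim_scale hR pq) => i; rewrite -ci; apply: rdvdMr; exact: rdvd_refl.
have kl : k * l = 1.
  by apply: (mulIf x0); rewrite mul1r -mulrA -el -ek.
exists l; first by apply/unitrPr; exists k; rewrite mulrC.
apply/polyP => i; rewrite coefZ; apply: (mulfI x0).
by rewrite ci el; ring.
Qed.

Lemma fcoef_mem f q : fcoef f q != 0 -> q \in map fst f.
Proof.
apply: contraR => nq; rewrite /fcoef big_seq_cond big1 // => x /andP [xf /eqP e].
by case/negP: nq; rewrite -e; apply: map_f.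
Qed.

Lemma content_ex f : exists c, content f c.
Proof.
have [c [h1 h2]] := lgcd_ex hR [seq fcoef f q | q <- map fst f].
exists c; split.
  move=> a [q [qn ->]]; apply: h1; apply: map_f; exact: fcoef_mem.
move=> e he; apply: h2 => a /mapP [q _ ->].
have [->|qn] := eqVneq (fcoef f q) 0; first exact: rdvd0.
by apply: he; exists q.
Qed.

Definition primq f := forall d, (forall q, rdvd d (fcoef f q)) -> d \is a GRing.unit.

Lemma primitive_primq f : primitive f -> primq f.
Proof.
move=> pf d hd; have [c hc] := content_ex f.
apply: (rdvd_unit _ (pf c hc)); apply: hc.2 => a [q [_ ->]]; exact: hd.
Qed.

Lemma primq_primitive f : primq f -> primitive f.
Proof.
move=> pf d hd; apply: pf => q.
have [->|qn] := eqVneq (fcoef f q) 0; first exact: rdvd0.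
by apply: hd.1; exists q.
Qed.

Lemma prim_Pp N f : (0 < N)%N -> okl N f -> prim (Pp N f) <-> primq f.
Proof.
move=> N0 ok; split => h d hd; apply: h.
  by move=> i; rewrite coef_Pp.
move=> q; have [[n ->]|nq] := classic (okq N q); first by rewrite -coef_Pp.
by rewrite (fcoef_nok ok nq); exact: rdvd0.
Qed.
End Content.

Section Main.
Variable M : pred rat.
Variable R : idomainType.
Hypothesis hM : puiseux_monoid M.
Hypothesis hR : gcd_domain R.
Local Notation F := {fraction R}.
Local Notation tf := (@to_frac_sring R).

Lemma tofrac_inj : injective (@FracField.tofrac R).
Proof. by move=> x y /eqP; rewrite tofrac_eq => /eqP. Qed.

Lemma mapF_inj : injective (map_poly (@FracField.tofrac R)).
Proof. apply: map_inj_poly; [exact: tofrac_inj | exact: rmorph0]. Qed.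

Lemma size_mapF (p : {poly R}) : size (map_poly (@FracField.tofrac R) p) = size p.
Proof. apply: size_map_inj_poly; [exact: tofrac_inj | exact: rmorph0]. Qed.

Lemma lift_props N (G : {poly F}) (a c1 : R) (G' G1 : {poly R}) :
  (forall i, G`_i != 0 -> i%:R / N%:R \in M) -> a != 0 ->
  map_poly (@FracField.tofrac R) G' = a%:F *: G -> G' = c1 *: G1 -> (1 < size G)%N ->
  [/\ c1 != 0, (forall i, G1`_i != 0 -> i%:R / N%:R \in M) & size G1 = size G].
Proof.
move=> hG a0 eG eG1 sG.
have aF0 : a%:F != 0 by rewrite tofrac_eq0.
have sG' : size G' = size G by rewrite -size_mapF eG size_scale.
have c10 : c1 != 0.
  apply/eqP => c10; move: sG; rewrite -sG' eG1 c10 scale0r size_poly0 //.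
split => //.
  move=> i G1i; apply: hG.
  have : (map_poly (@FracField.tofrac R) G')`_i != 0.
    by rewrite coef_map /= tofrac_eq0 eG1 coefZ mulf_neq0.
  by rewrite eG coefZ mulf_eq0 negb_or => /andP [].
by rewrite -sG' eG1 size_scale.
Qed.

Lemma small_factor N (f g h : seq (rat * R)) : (0 < N)%N -> okl N f -> okl N g -> okl N h ->
  Pp N f = Pp N g * Pp N h -> prim (Pp N f) -> (size (Pp N g) <= 1)%N -> sr_unit M g.
Proof.
move=> N0 okf okg okh e pp sg.
have ec := size1_polyC sg.
move: ec; set c := (Pp N g)`_0 => ec.
have cu : c \is a GRing.unit.
  apply: pp => i; rewrite e ec mul_polyC coefZ; apply: rdvdMr; exact: rdvd_refl.
exact (const_unit hM N0 okg ec cu).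
Qed.

Lemma backward f : in_sring M f -> ~ sr_const f ->
  primitive f -> sr_irreducible M (tf f) -> sr_irreducible M f.
Proof.
move=> hf hnc pf [_ _ irr]; split.
- exact: nonconst_nz hnc.
- exact (nonconst_nonunit hM hf hnc).
move=> g h hg hh e.
have [|N [N0 hN]] := exN (s := map fst f ++ map fst g ++ map fst h).
  move=> q; rewrite !mem_cat => /or3P [] qs; apply: (in_sring_pos hM _ qs) => //.
have okf : okl N f by apply: okl_of hN _ => q qs; rewrite !mem_cat qs.
have okg : okl N g by apply: okl_of hN _ => q qs; rewrite !mem_cat qs orbT.
have okh : okl N h by apply: okl_of hN _ => q qs; rewrite !mem_cat qs !orbT.
have ePp : Pp N f = Pp N g * Pp N h.
  by rewrite -Pp_mul //; apply/(Pp_feq N0 okf (okl_fmul N0 okg okh)).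
have pp : prim (Pp N f) by apply/(prim_Pp N0 okf); exact: primitive_primq.
have : sr_unit M (tf g) \/ sr_unit M (tf h).
  apply: irr; [exact: in_sring_frac | exact: in_sring_frac | ].
  by rewrite -to_frac_fmul; exact: feq_frac.
case=> u; [left|right].
- apply: (small_factor N0 okf okg okh ePp pp).
  apply/(Pp_const N0 okg)/const_frac; exact (unit_const' hM (in_sring_frac hg) u).
- rewrite mulrC in ePp; apply: (small_factor N0 okf okh okg ePp pp).
  apply/(Pp_const N0 okh)/const_frac; exact (unit_const' hM (in_sring_frac hh) u).
Qed.

Lemma ok_one (K : idomainType) (f : seq (rat * K)) : in_sring M f ->
  exists N, [/\ (0 < N)%N & okl N f].
Proof.
move=> hf; have [|N [N0 hN]] := exN (s := map fst f).
  by move=> q qs; exact: (in_sring_pos hM hf qs).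
by exists N; split => //; apply: okl_of hN _.
Qed.

Lemma forward_prim (f : seq (rat * R)) : in_sring M f -> ~ sr_const f ->
  sr_irreducible M f -> primq f.
Proof.
move=> hf hnc [fnz fnu irr].
have [N [N0 okf]] := ok_one hf.
have sp : (1 < size (Pp N f))%N.
  by rewrite ltnNge; apply/negP => /(Pp_const N0 okf).
move=> d hd.
have hdp : forall i, rdvd d (Pp N f)`_i by move=> i; rewrite coef_Pp.
have [p' ep] := divide_out hdp.
have d0 : d != 0.
  by apply/eqP => d0; move: sp; rewrite ep d0 scale0r size_poly0.
have hh : in_sring M (Qp N p').
  apply: in_sring_Q => i pi; apply: (supp_Pp N0 okf hf).
  by rewrite ep coefZ mulf_neq0.
have e : feq f (fmul [:: (0, d)] (Qp N p')).
  have h1 := okl_fmul N0 (okl_C N (u:=d)) (okl_Q (N:=N) (p:=p')).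
  have h2 := Pp_feq N0 okf h1; apply/h2.
  rewrite (Pp_mul N0 (okl_C N (u:=d)) (okl_Q (N:=N) (p:=p'))) Pp_C (Pp_Q N0) ep.
  by rewrite mul_polyC.
case: (irr _ _ (in_sring_C hM d) hh e) => u; first exact (C_unit hM u).
have := unit_const' hM hh u.
move/(Pp_const N0 (okl_Q (N:=N) (p:=p'))); rewrite Pp_Q // => sp'.
by move: sp; rewrite ep size_scale // ltnNge sp'.
Qed.

Lemma big_factor N (f : seq (rat * R)) (g h : seq (rat * F)) : (0 < N)%N -> okl N g ->
  map_poly (@FracField.tofrac R) (Pp N f) = Pp N g * Pp N h -> Pp N f != 0 ->
  ~ sr_unit M g -> (1 < size (Pp N g))%N.
Proof.
move=> N0 okg e f0 nu; rewrite ltnNge; apply/negP => sg.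
have ec := size1_polyC sg; move: ec; set c := (Pp N g)`_0 => ec.
apply: nu; apply: (const_unit hM N0 okg ec); rewrite unitfE.
apply/eqP => c0; move/eqP: f0; apply; apply: mapF_inj.
by rewrite map_poly0 e ec c0 mul0r.
Qed.

Lemma forward_frac (f : seq (rat * R)) : in_sring M f -> ~ sr_const f ->
  sr_irreducible M f -> primq f -> sr_irreducible M (tf f).
Proof.
move=> hf hnc irrf pq; have [fnz fnu irr] := irrf.
split.
- move=> e; apply: fnz => q; move: (e q); rewrite fcoef_frac !fcoef_nil => /eqP.
  by rewrite tofrac_eq0 => /eqP.
- move=> u; apply: hnc; apply/const_frac; exact (unit_const' hM (in_sring_frac hf) u).
move=> g h hg hh e; apply: NNPP => nu.
have nug : ~ sr_unit M g by move=> u; apply: nu; left.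
have nuh : ~ sr_unit M h by move=> u; apply: nu; right.
have [|N [N0 hN]] := exN (s := map fst f ++ map fst g ++ map fst h).
  move=> q; rewrite !mem_cat => /or3P [] qs; apply: (in_sring_pos hM _ qs) => //.
have okf : okl N f by apply: okl_of hN _ => q qs; rewrite !mem_cat qs.
have okg : okl N g by apply: okl_of hN _ => q qs; rewrite !mem_cat qs orbT.
have okh : okl N h by apply: okl_of hN _ => q qs; rewrite !mem_cat qs !orbT.
have ePp : map_poly (@FracField.tofrac R) (Pp N f) = Pp N g * Pp N h.
  rewrite -Pp_frac // -Pp_mul //.
  have h1 := okl_fmul N0 okg okh; have h2 := Pp_feq N0 (okl_frac okf) h1.
  by apply/h2.
have sp : (1 < size (Pp N f))%N.
  by rewrite ltnNge; apply/negP => /(Pp_const N0 okf).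
have f0 : Pp N f != 0 by rewrite -size_poly_gt0; apply: ltnW.
have sg := big_factor N0 okg ePp f0 nug.
have sh : (1 < size (Pp N h))%N.
  by apply: (big_factor (g:=h) (h:=g) N0 okh _ f0 nuh); rewrite mulrC.
have [a [a0 [G' eG]]] := clear_den (Pp N g).
have [b [b0 [H' eH]]] := clear_den (Pp N h).
have [c1 [G1 [eG1 pG1]]] := decomp hR G'.
have [c2 [H1 [eH1 pH1]]] := decomp hR H'.
have [c10 suppG1 sG1] := lift_props (supp_Pp N0 okg hg) a0 eG eG1 sg.
have [c20 suppH1 sH1] := lift_props (supp_Pp N0 okh hh) b0 eH eH1 sh.
have eR : (a * b) *: Pp N f = (c1 * c2) *: (G1 * H1).
  have -> : (c1 * c2) *: (G1 * H1) = G' * H' by rewrite eG1 eH1 -scalerAl -scalerAr scalerA.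
  apply: mapF_inj; rewrite rmorphM /= map_polyZ /= eG eH ePp rmorphM /=.
  by rewrite -!mul_polyC; ring.
have pp : prim (Pp N f) by apply/(prim_Pp N0 okf).
have [u uu ep] := assoc hR (mulf_neq0 a0 b0) eR pp (gauss hR pG1 pH1).
have u0 : u != 0 by apply/eqP => u0; move: uu; rewrite u0 unitr0.
have hA : in_sring M (Qp N (u *: G1)).
  by apply: in_sring_Q => i; rewrite coefZ mulf_eq0 negb_or => /andP [_ /suppG1].
have hB : in_sring M (Qp N H1) by apply: in_sring_Q.
have eAB : feq f (fmul (Qp N (u *: G1)) (Qp N H1)).
  have h1 := okl_fmul N0 (okl_Q (N:=N) (p:=u *: G1)) (okl_Q (N:=N) (p:=H1)).
  have h2 := Pp_feq N0 okf h1; apply/h2.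
  by rewrite (Pp_mul N0 (okl_Q (N:=N) (p:=u *: G1)) (okl_Q (N:=N) (p:=H1))) !(Pp_Q N0) ep scalerAl.
case: (irr _ _ hA hB eAB) => un.
- have := unit_const' hM hA un.
  move/(Pp_const N0 (okl_Q (N:=N) (p:=u *: G1))); rewrite (Pp_Q N0) size_scale // sG1.
  by rewrite leqNgt sg.
- have := unit_const' hM hB un.
  move/(Pp_const N0 (okl_Q (N:=N) (p:=H1))); rewrite (Pp_Q N0) sH1.
  by rewrite leqNgt sh.
Qed.
End Main.

Theorem mainTheorem2 (M : pred rat) (R : idomainType)
  (hM : puiseux_monoid M) (hR : gcd_domain R)
  (f : seq (rat * R)) (hf : in_sring M f) (hnc : ~ sr_const f) :
  sr_irreducible M f <->
  (primitive f /\ sr_irreducible M (to_frac_sring f)).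
Proof.
split.
- move=> irr; have pq := forward_prim hM hf hnc irr.
  split; first exact: primq_primitive.
  exact: (forward_frac hM hR hf hnc irr pq).
- by move=> [pf irrF]; apply: (backward hM hR hf hnc pf irrF).
Qed.
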